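(* Let $\mathcal{M}$ be the set of compactly supported probability distributions on $\mathbb{R}$ and let $\mathcal{D}^R=\{T_d: d \text{ a right-continuous distortion function}\}$. Let $T:\mathcal{M}\to\mathcal{M}$ be monotone. Then $\mathcal{D}^R\circ T=T\circ\mathcal{D}^R$ if and only if $T=T_d\circ T^u$ for some increasing left-continuous function $u:\mathbb{R}\to\mathbb{R}$ and some strictly increasing continuous distortion function $d$.
   Context: Increasing means non-decreasing. A distortion function is an increasing function $d:[0,1]\to[0,1]$ with $d(0)=0$, $d(1)=1$. $T_d(F)(x)=\lim_{y\downarrow x}d(F(y))$. For an increasing function $u:\mathbb{R}\to\mathbb{R}$, $T^u(F)=F\circ u^{-1}$ is the distribution of $u(X)$ when $X\sim F$. For a set $\mathcal{T}$ of maps $\mathcal{M}\to\mathcal{M}$, $\mathcal{T}\circ T=\{T'\circ T:T'\in\mathcal{T}\}$ and $T\circ\mathcal{T}=\{T\circ T':T'\in\mathcal{T}\}$. For $F,G\in\mathcal{M}$, $F\le_{\rm st}G$ means $F(x)\ge G(x)$ for all $x$; $T$ is monotone if $F\le_{\rm st}G$ implies $T(F)\le_{\rm st}T(G)$. *)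

(* Defs.v *)
From HB Require Import structures.
From mathcomp Require Import all_boot all_order all_algebra.
From mathcomp Require Import all_classical all_reals all_analysis.
Set Implicit Arguments. Unset Strict Implicit. Unset Printing Implicit Defensive.
Import Order.TTheory GRing.Theory Num.Theory.
Import numFieldNormedType.Exports.
Local Open Scope classical_set_scope.
Local Open Scope ring_scope.

Section Defs.
Variable R : realType.

Definition increasing (f : R -> R) : Prop := forall x y, x <= y -> f x <= f y.

(* Distribution functions (CDFs) of compactly supported probability
   distributions on R: the set M. *)
Definition inM (F : R -> R) : Prop :=
  increasing F /\
  (forall x, F y @[y --> x^'+] --> F x) /\
  exists a b : R, (forall x, x < a -> F x = 0) /\ (forall x, b <= x -> F x = 1).

Definition le_st (F G : R -> R) : Prop := forall x, G x <= F x.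

Definition monotone_map (T : (R -> R) -> (R -> R)) : Prop :=
  forall F G, inM F -> inM G -> le_st F G -> le_st (T F) (T G).

(* distortion function d : [0,1] -> [0,1] (values of d outside [0,1] are
   irrelevant) *)
Definition distortion (d : R -> R) : Prop :=
  (forall x y, 0 <= x -> x <= y -> y <= 1 -> d x <= d y) /\
  (forall x, 0 <= x <= 1 -> 0 <= d x <= 1) /\
  d 0 = 0 /\ d 1 = 1.

Definition right_cont_distortion (d : R -> R) : Prop :=
  distortion d /\ (forall x, 0 <= x < 1 -> d y @[y --> x^'+] --> d x).

Definition strict_cont_distortion (d : R -> R) : Prop :=
  distortion d /\
  (forall x y, 0 <= x -> x < y -> y <= 1 -> d x < d y) /\
  {within `[0, 1], continuous d}.

Definition Td (d : R -> R) (F : R -> R) : R -> R :=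
  fun x => lim (d (F y) @[y --> x^'+]).

(* T^u(F) = F o u^{-1} = distribution function of u(X), X ~ F:
   T^u(F)(y) = P(u(X) <= y) = P(X in {x | u x <= y}); since {x | u x <= y}
   is a down-set, its probability is sup_{u x <= y} F x (sup of empty = 0). *)
Definition Tu (u : R -> R) (F : R -> R) : R -> R :=
  fun y => sup [set F x | x in [set x | u x <= y]].

End Defs.

(* Main.v *)
Require Import Defs.
From HB Require Import structures.
From mathcomp Require Import all_boot all_order all_algebra.
From mathcomp Require Import all_classical all_reals all_analysis.
From mathcomp Require Import lra.
Import Order.TTheory GRing.Theory Num.Theory.
Import numFieldNormedType.Exports.
Local Open Scope classical_set_scope.
Local Open Scope ring_scope.

Section S.
Variable R : realType.
Implicit Types (f g F G d h u : R -> R) (x y z p a b : R).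
Definition P p a b : R -> R := fun t => if t < a then 0 else if t < b then p else 1.
Definition dlt c := P 0 c c.

Lemma rcP f x l : f y @[y --> x^'+] --> l <->
  forall e, 0 < e -> exists2 d, 0 < d & forall y, x < y < x + d -> `|f y - l| < e.
Proof.
rewrite cvgrPdistC_lt; split.
- move=> H e e0; have := H e e0; rewrite /at_right near_withinE => /nbhs_ballP [d d0 Hd].
  exists d => // y /andP[xy yd]; apply: Hd => //.
  by rewrite /ball /= ltr0_norm ?subr_lt0 // opprB ltrBlDl.
- move=> H e e0; have [d d0 Hd] := H e e0; rewrite /at_right near_withinE.
  apply/nbhs_ballP; exists d => // y; rewrite /ball /= => xyd xy; apply: Hd.
  rewrite xy /=; move: xyd; rewrite ltr0_norm ?subr_lt0 // opprB ltrBlDl //.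
Qed.

Lemma lcP f x l : f y @[y --> x^'-] --> l <->
  forall e, 0 < e -> exists2 d, 0 < d & forall y, x - d < y < x -> `|f y - l| < e.
Proof.
rewrite cvgrPdistC_lt; split.
- move=> H e e0; have := H e e0; rewrite /at_left near_withinE => /nbhs_ballP [d d0 Hd].
  exists d => // y /andP[xy yd]; apply: Hd => //.
  by rewrite /ball /= gtr0_norm ?subr_gt0 // ltrBlDr -ltrBlDl.
- move=> H e e0; have [d d0 Hd] := H e e0; rewrite /at_left near_withinE.
  apply/nbhs_ballP; exists d => // y; rewrite /ball /= => xyd xy; apply: Hd.
  rewrite xy andbT; move: xyd; rewrite gtr0_norm ?subr_gt0 // ltrBlDr -ltrBlDl //.
Qed.

Lemma rc_loc f x : (exists2 d, 0 < d & forall y, x < y < x + d -> f y = f x) ->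
  f y @[y --> x^'+] --> f x.
Proof.
move=> [d d0 Hd]; apply/rcP => e e0; exists d => // y Hy.
by rewrite Hd // subrr normr0.
Qed.

Lemma P_inc p a b : 0 <= p <= 1 -> increasing (P p a b).
Proof.
move=> /andP[p0 p1] x y xy; rewrite /P.
case: (ltP x a) => xa; case: (ltP y a) => ya; case: (ltP x b) => xb; case: (ltP y b) => yb; lra.
Qed.

Lemma P_rc p a b x : P p a b y @[y --> x^'+] --> P p a b x.
Proof.
apply: rc_loc; case: (ltP x a) => xa.
  exists (a - x); first lra.
  move=> y /andP[h1 h2]; rewrite /P; case: (ltP y a); case: (ltP x a); case: (ltP y b); case: (ltP x b); move=> *; lra.
case: (ltP x b) => xb.
  exists (b - x); first lra.
  move=> y /andP[h1 h2]; rewrite /P; case: (ltP y a); case: (ltP x a); case: (ltP y b); case: (ltP x b); move=> *; lra.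
exists 1; first lra.
move=> y /andP[h1 h2]; rewrite /P; case: (ltP y a); case: (ltP x a); case: (ltP y b); case: (ltP x b); move=> *; lra.
Qed.

Lemma inM01 F : inM F -> forall x, 0 <= F x <= 1.
Proof.
move=> [Fi [Frc [a [b [F0 F1]]]]] x; apply/andP; split.
  case: (ltP x a) => xa; first by rewrite F0.
  rewrite -(F0 (a - 1)); last lra.
  apply: Fi; lra.
case: (leP b x) => bx; first by rewrite F1.
rewrite -(F1 b) //; apply: Fi; lra.
Qed.

Arguments inM01 [F].

Lemma inM_P p a b : 0 <= p <= 1 -> inM (P p a b).
Proof.
move=> hp; split; first exact: P_inc.
split; first by move=> x; apply: (P_rc p a b x).
exists a, (Num.max a b); split.
  by move=> x xa; rewrite /P xa.
move=> x; rewrite ge_max => /andP[ax bx]; rewrite /P.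
case: (ltP x a); case: (ltP x b); move=> *; lra.
Qed.

Lemma delta_inM c : inM (dlt c).
Proof. by apply: inM_P; rewrite lexx ler01. Qed.

Lemma P_comp h p a b : h 0 = 0 -> h 1 = 1 -> (fun t => h (P p a b t)) = P (h p) a b.
Proof. by move=> h0 h1; apply/funext => t; rewrite /P; do 2?case: ifP => //. Qed.

Lemma P_same p q c : P p c c = P q c c.
Proof. by apply/funext => t; rewrite /P; do 2?case: ifP => //. Qed.

Lemma P_1 a b : P 1 a b = dlt a.
Proof. by apply/funext => t; rewrite /dlt /P; do 2?case: ifP => //. Qed.

Lemma P_0 a b : a <= b -> P 0 a b = dlt b.
Proof.
move=> ab; apply/funext => t; rewrite /dlt /P.
case: (ltP t a); case: (ltP t b); move=> *; lra.
Qed.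

Lemma P_eqab p a b : a = b -> P p a b = dlt a.
Proof. by move=> <-; exact: P_same. Qed.

Lemma comp_rc d G x : right_cont_distortion d -> (forall y, 0 <= G y <= 1) ->
  increasing G -> G y @[y --> x^'+] --> G x -> d (G y) @[y --> x^'+] --> d (G x).
Proof.
move=> [[dm [dr [d0 dd1]]] drc] G01 Gi Grc.
apply/rcP => e e0.
have [/eqP G1|Gn1] := boolP (G x == 1).
  exists 1 => // y /andP[xy _].
  have : G y = 1 by apply/eqP; rewrite eq_le (andP (G01 y)).2 -G1 Gi // ltW.
  by move=> ->; rewrite G1 subrr normr0.
have Gx1 : G x < 1 by rewrite lt_neqAle Gn1 (andP (G01 x)).2.
have G0x : 0 <= G x < 1 by rewrite Gx1 (andP (G01 x)).1.
have /rcP/(_ e e0) [d1 d10 Hd1] := drc (G x) G0x.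
have /rcP/(_ d1 d10) [d2 d20 Hd2] := Grc.
exists d2 => // y Hy; have := Hd2 y Hy.
have Gxy : G x <= G y by apply: Gi; case/andP: Hy => /ltW.
move: Gxy; rewrite le_eqVlt => /orP[/eqP ->|lt] Hy2; first by rewrite subrr normr0.
move: Hy2; rewrite gtr0_norm ?subr_gt0 // ltrBlDl => Hy2; apply: Hd1; by rewrite lt Hy2.
Qed.

Lemma Td_eq d G x : right_cont_distortion d -> (forall y, 0 <= G y <= 1) ->
  increasing G -> G y @[y --> x^'+] --> G x -> Td d G x = d (G x).
Proof.
move=> hd G01 Gi Grc; rewrite /Td; apply: cvg_lim => //; exact: comp_rc.
Qed.

Lemma inM_comp d F : right_cont_distortion d -> inM F -> inM (fun t => d (F t)).
Proof.
move=> hd FM; have F01 := inM01 FM.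
have [[dm [dr [d0 dd1]]] drc] := hd.
have [Fi [Frc [a [b [Fa Fb]]]]] := FM.
split; first by move=> x y xy; apply: dm; [exact: (andP (F01 x)).1|exact: Fi|exact: (andP (F01 y)).2].
split; first by move=> x; apply: comp_rc.
by exists a, b; split => x hx; [rewrite Fa|rewrite Fb].
Qed.

Lemma Td_inM d F : right_cont_distortion d -> inM F -> Td d F = (fun t => d (F t)).
Proof.
move=> hd FM; apply/funext => x; apply: Td_eq => //; first exact: inM01.
  by case: FM.
by case: FM => _ [+ _]; apply.
Qed.

Arguments Td_inM [d F].

Lemma rcd_P v c : 0 < c <= 1 -> 0 <= v <= 1 -> right_cont_distortion (P v c 1).
Proof.
move=> /andP[c0 c1] hv; split; last by move=> x _; exact: P_rc.
split; first by move=> x y _ xy _; exact: P_inc.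
split; first by move=> x _; exact: (@inM01 (P v c 1) (inM_P v c 1 hv) x).
split; first by rewrite /P c0.
by rewrite /P ltxx; case: ltP => //; lra.
Qed.


Lemma dltE c t : dlt c t = if t < c then 0 else 1.
Proof. by rewrite /dlt /P; case: ifP => //; case: ifP. Qed.

Lemma dlt_self c : dlt c c = 1.
Proof. by rewrite dltE ltxx. Qed.

Lemma Tu_ge u F y x : inM F -> u x <= y -> F x <= Tu u F y.
Proof.
move=> FM uxy; rewrite /Tu; apply: ub_le_sup; last by exists x.
by exists 1 => w [z _ <-]; have /andP[] := inM01 FM z.
Qed.

Arguments Tu_ge [u F y x].

Lemma Tu_le u F y c : (forall x, u x <= y -> F x <= c) -> 0 <= c -> Tu u F y <= c.
Proof.
move=> H c0; rewrite /Tu.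
have [[x hx]|nex] := pselect (exists x, u x <= y).
  apply: ge_sup; first by exists (F x), x.
  by move=> w [z hz <-]; exact: H.
have -> : [set F x | x in [set x | u x <= y]] = set0.
  by apply/seteqP; split => // w [z hz _]; apply: nex; exists z.
by rewrite sup0.
Qed.

Lemma Tu_empty u F y : (forall x, y < u x) -> Tu u F y = 0.
Proof.
move=> H; rewrite /Tu.
have -> : [set F x | x in [set x | u x <= y]] = set0.
  by apply/seteqP; split => // w [z /= hz _]; have := H z; rewrite ltNge hz.
by rewrite sup0.
Qed.

Lemma Tu01 u F y : inM F -> 0 <= Tu u F y <= 1.
Proof.
move=> FM; apply/andP; split; last first.
  by apply: Tu_le => // x _; have /andP[] := inM01 FM x.
have [[x hx]|nex] := pselect (exists x, u x <= y).
  by apply: (le_trans _ (Tu_ge FM hx)); have /andP[] := inM01 FM x.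
rewrite Tu_empty // => x; rewrite ltNge; apply/negP => h; apply: nex; by exists x.
Qed.

Lemma P_mono r1 r2 a b : r1 <= r2 -> forall t, P r1 a b t <= P r2 a b t.
Proof. by move=> r12 t; rewrite /P; case: ifP => _ //; case: ifP. Qed.


Definition unif x t := if t < x - 1 then 0 else if t < x then t - x + 1 else 1.

Arguments inM_comp [d F].



Lemma unif_lip x t y : t <= y -> 0 <= unif x y - unif x t <= y - t.
Proof.
move=> ty; rewrite /unif.
case: (ltP t (x - 1)); case: (ltP y (x - 1)); case: (ltP t x); case: (ltP y x) => *; apply/andP; split; lra.
Qed.

Lemma unif_inM x : inM (unif x).
Proof.
split; first by move=> t y ty; have /andP[h _] := unif_lip x t y ty; lra.
split.
  move=> t; apply/rcP => e e0; exists e => // y /andP[ty ye].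
  have /andP[h1 h2] := unif_lip x t y (ltW ty).
  rewrite ger0_norm //; lra.
exists (x - 1), x; split => t ht; rewrite /unif.
  by rewrite ht.
by rewrite ltNge (le_trans _ ht) /=; [case: ifP => // ?; lra | lra].
Qed.

Lemma lr_cont f x : f y @[y --> x^'+] --> f x -> f y @[y --> x^'-] --> f x ->
  {for x, continuous f}.
Proof.
move=> /rcP hr /lcP hl; apply/cvgrPdist_lt => e e0.
have [d1 d10 H1] := hr e e0; have [d2 d20 H2] := hl e e0.
have [dd [dd0 [dd1 dd2]]] : exists dd, 0 < dd /\ dd <= d1 /\ dd <= d2.
  case: (leP d1 d2) => h; [exists d1 | exists d2]; split => //; split => //; lra.
apply/nbhs_ballP; exists dd => //.
move=> y; rewrite /ball /= => yy.
have y1 : `|x - y| < d1 by lra.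
have y2 : `|x - y| < d2 by lra.
rewrite distrC.
case: (ltgtP y x) => yx.
- apply: H2; move: y2; rewrite gtr0_norm ?subr_gt0 // => y3; apply/andP; split; lra.
- apply: H1; move: y1; rewrite ltr0_norm ?subr_lt0 // => y3; apply/andP; split; lra.
- by rewrite yx subrr normr0.
Qed.



Section Fwd.
Variable T : (R -> R) -> (R -> R).
Hypothesis TM : forall F, inM F -> inM (T F).
Hypothesis Tmono : monotone_map T.
Hypothesis H1 : forall d, right_cont_distortion d ->
       exists d', right_cont_distortion d' /\
         forall F, inM F -> Td d (T F) = T (Td d' F).
Hypothesis H2 : forall d', right_cont_distortion d' ->
       exists d, right_cont_distortion d /\
         forall F, inM F -> Td d (T F) = T (Td d' F).

Lemma H1' d : right_cont_distortion d -> exists d', right_cont_distortion d' /\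
  forall F, inM F -> (fun t => d (T F t)) = T (fun t => d' (F t)).
Proof.
move=> hd; have [d' [hd' E]] := H1 _ hd; exists d'; split => // F FM.
by rewrite -(Td_inM hd (TM _ FM)) -(Td_inM hd' FM) E.
Qed.

Lemma H2' d' : right_cont_distortion d' -> exists d, right_cont_distortion d /\
  forall F, inM F -> (fun t => d (T F t)) = T (fun t => d' (F t)).
Proof.
move=> hd'; have [d [hd E]] := H2 _ hd'; exists d; split => // F FM.
by rewrite -(Td_inM hd (TM _ FM)) -(Td_inM hd' FM) E.
Qed.

Lemma T_le F G : inM F -> inM G -> (forall t, G t <= F t) -> forall t, T G t <= T F t.
Proof. by move=> FM GM h; apply: Tmono. Qed.

Lemma rcd_d01 d : right_cont_distortion d -> d 0 = 0 /\ d 1 = 1.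
Proof. by case=> [[_ [_ [-> ->]]]]. Qed.

Lemma rcd_01 d p : right_cont_distortion d -> 0 <= p <= 1 -> 0 <= d p <= 1.
Proof. by case=> [[_ [+ _]]] _; apply. Qed.

Arguments rcd_d01 [d].
Arguments rcd_01 [d p].
Arguments T_le [F G].

Lemma stepC x : exists c, T (dlt x) = dlt c.
Proof.
have GM := TM _ (delta_inM x); set G := T (dlt x) in GM *.
have d0rc : right_cont_distortion (P 0 1 1).
  by apply: rcd_P; rewrite ?ltr01 ?lexx ?ler01.
have [d' [d'rc Hd']] := H1' _ d0rc.
have E := Hd' _ (delta_inM x).
have [d'0 d'1] := rcd_d01 d'rc.
rewrite /dlt P_comp // (P_same _ 0) -/(dlt x) -/G in E.
have G01 : forall t, G t = 0 \/ G t = 1.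
  move=> t; have := congr1 (fun f => f t) E; rewrite /= /P.
  by case: ltP => _ <-; [left|right].
have G01' := inM01 GM.
have [Gi [Grc [a [b [Ga Gb]]]]] := GM.
pose Z := [set t | G t = 0].
have Zub : ubound Z b.
  move=> t; rewrite /Z /= => Gt; rewrite leNgt; apply/negP => bt.
  by move: Gt; rewrite Gb ?(ltW bt) //; apply/eqP; rewrite oner_eq0.
have Zne : Z !=set0 by exists (a - 1); rewrite /Z /= Ga //; lra.
have Zsup : has_sup Z by split => //; exists b.
exists (sup Z); apply/funext => t; rewrite /dlt /P.
case: (ltP t (sup Z)) => tc.
  have [z Zz tz] := sup_gt Zne tc.
  have /andP[h0 h1] := G01' t.
  apply/eqP; rewrite eq_le h0 andbT -Zz /=; apply: Gi; exact: ltW.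
have /rcP/(_ (1/2)) [|dd dd0 Hdd] := Grc t; first lra.
have := Hdd (t + dd / 2); rewrite (_ : G (t + dd/2) = 1).
  case: (G01 t) => -> //; rewrite subr0 normr1 => H; exfalso.
  have : t < t + dd / 2 < t + dd by apply/andP; split; lra.
  by move/H; lra.
case: (G01 (t + dd/2)) => // HZ; exfalso.
have := ub_le_sup (proj2 Zsup) HZ; lra.
Qed.


Definition uu := projT1 (choice stepC).
Lemma uP x : T (dlt x) = dlt (uu x).
Proof. exact: (projT2 (choice stepC) x). Qed.

Lemma uu_inc : increasing uu.
Proof.
move=> x y xy.
have H := @T_le (dlt x) (dlt y) (delta_inM x) (delta_inM y).
have H' : forall t, dlt y t <= dlt x t.
  move=> t; rewrite /dlt /P; case: (ltP t x); case: (ltP t y) => *; lra.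
have := H H' (uu y); rewrite !uP /dlt /P ltxx; case: ltP => *; lra.
Qed.

Lemma TP a b p : a <= b -> 0 <= p <= 1 ->
  T (P p a b) = P (T (P p a b) (uu a)) (uu a) (uu b).
Proof.
move=> ab hp; have PM := inM_P p a b hp.
have GM := TM _ PM; set G := T (P p a b) in GM *.
have G01 := inM01 GM; have Gi : increasing G by case: GM.
have hup : forall t, G t <= dlt (uu a) t.
  rewrite -uP; apply: T_le => // [|t]; first exact: delta_inM.
  have /andP[p0 p1] := hp.
  rewrite /dlt /P; case: (ltP t a); case: (ltP t b) => *; lra.
have hlo : forall t, dlt (uu b) t <= G t.
  rewrite -uP; apply: T_le => // [|t]; first exact: delta_inM.
  have /andP[p0 p1] := hp.
  rewrite /dlt /P; case: (ltP t a); case: (ltP t b) => *; lra.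
suff mid : forall t, uu a <= t < uu b -> G t = G (uu a).
  apply/funext => t; rewrite {1}/P; case: (ltP t (uu a)) => ta.
    have := hup t; have := G01 t; rewrite /dlt /P ta => /andP[h0 _] h1; lra.
  case: (ltP t (uu b)) => tb; first by apply: mid; rewrite ta tb.
  have := hlo t; have := G01 t; rewrite /dlt /P ltNge tb /= => /andP[_ h0] h1; lra.
move=> t /andP[uat tb].
have /andP[p0 p1] := hp.
have [pe|pn0] := eqVneq p 0.
  by rewrite /G pe P_0 // uP /dlt /P tb (le_lt_trans uat tb).
have [pe'|pn1] := eqVneq p 1.
  by rewrite /G pe' P_1 uP /dlt /P ltxx ltNge uat.
have p0' : 0 < p by rewrite lt_neqAle eq_sym pn0.
have p1' : p < 1 by rewrite lt_neqAle pn1.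
have s1pos : 0 < G (uu a).
  have hd' : right_cont_distortion (P 1 p 1).
    by apply: rcd_P; rewrite ?p0' ?(ltW p1') ?ler01 ?lexx.
  have [e [he Ee]] := H2' _ hd'.
  have [h0 h1] := rcd_d01 hd'.
  have Pp : P 1 p 1 p = 1 by rewrite /P ltxx p1'.
  have := Ee _ PM; rewrite P_comp // Pp P_1 uP.
  move/(congr1 (fun f => f (uu a))); rewrite /= dlt_self.
  have /andP[g0 _] := G01 (uu a); rewrite le_eqVlt in g0.
  rewrite -/G; case/orP: g0 => // /eqP <-; have [-> _] := rcd_d01 he; lra.
have s2lt : G t < 1.
  have hd' : right_cont_distortion (P 0 1 1).
    by apply: rcd_P; rewrite ?ltr01 ?ler01 ?lexx.
  have [e [he Ee]] := H2' _ hd'.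
  have [h0 h1] := rcd_d01 hd'.
  have Pp : P 0 1 1 p = 0 by rewrite /P p1'.
  have := Ee _ PM; rewrite P_comp // Pp P_0 // uP.
  move/(congr1 (fun f => f t)); rewrite /= dltE tb -/G.
  have /andP[_ g1] := G01 t; rewrite le_eqVlt in g1.
  case/orP: g1 => // /eqP ->; have [_ ->] := rcd_d01 he; lra.
apply/eqP; rewrite eq_le; apply/andP; split; last exact: Gi.
rewrite leNgt; apply/negP => s12.
set s1 := G (uu a) in s1pos s12 *; set s2 := G t in s2lt s12 *.
have hd1 : right_cont_distortion (P (1/2) s1 1).
  by apply: rcd_P; apply/andP; split; lra.
have hd2 : right_cont_distortion (P 1 s2 1).
  by apply: rcd_P; apply/andP; split; lra.
have [d1 [hd1' E1]] := H1' _ hd1.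
have [d2 [hd2' E2]] := H1' _ hd2.
have := E1 _ PM; have := E2 _ PM.
have [d10 d11] := rcd_d01 hd1'; have [d20 d21] := rcd_d01 hd2'.
rewrite !P_comp //.
have r1 := rcd_01 hd1' hp; have r2 := rcd_01 hd2' hp.
move=> F2 F1.
case: (leP (d1 p) (d2 p)) => r12.
  have := @T_le (P (d2 p) a b) (P (d1 p) a b) (inM_P _ a b r2) (inM_P _ a b r1) (P_mono _ _ a b r12) (uu a).
  rewrite -F1 -F2 /P /= ltxx s12 /=.
  have -> : (s1 < 1) by lra.
  lra.
have := @T_le (P (d1 p) a b) (P (d2 p) a b) (inM_P _ a b r1) (inM_P _ a b r2) (P_mono _ _ a b (ltW r12)) t.
rewrite -F1 -F2 /P /= ltxx s2lt ltNge (ltW s12) /=; lra.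
Qed.


Definition cab a b p := T (P p a b) (uu a).

Lemma TP' a b p : a <= b -> 0 <= p <= 1 -> T (P p a b) = P (cab a b p) (uu a) (uu b).
Proof. exact: TP. Qed.

Lemma cab0 a b : a <= b -> uu a < uu b -> cab a b 0 = 0.
Proof. by move=> ab uab; rewrite /cab P_0 // uP dltE uab. Qed.

Arguments cab0 [a b].

Lemma cab1 a b : cab a b 1 = 1.
Proof. by rewrite /cab P_1 uP dlt_self. Qed.

Lemma cab01 a b p : 0 <= p <= 1 -> 0 <= cab a b p <= 1.
Proof. by move=> hp; exact: (inM01 (TM _ (inM_P p a b hp)) (uu a)). Qed.

Lemma cab_mono a b p q : 0 <= p <= 1 -> 0 <= q <= 1 -> p <= q -> cab a b p <= cab a b q.
Proof.
move=> hp hq pq; rewrite /cab.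
exact: (@T_le (P q a b) (P p a b) (inM_P _ a b hq) (inM_P _ a b hp) (P_mono _ _ a b pq)).
Qed.

Lemma R2 d' : right_cont_distortion d' -> exists e : R -> R, forall a b p, a <= b -> 0 <= p <= 1 ->
  cab a b (d' p) = e (cab a b p).
Proof.
move=> hd'; have [e [he Ee]] := H2' _ hd'; exists e => a b p ab hp.
have [h0 h1] := rcd_d01 hd'.
have := Ee _ (inM_P p a b hp); rewrite P_comp // => /(congr1 (fun f => f (uu a))) /= E.
by rewrite /cab -E.
Qed.

Lemma R1 e : right_cont_distortion e -> exists d', right_cont_distortion d' /\
  forall a b p, a <= b -> 0 <= p <= 1 -> e (cab a b p) = cab a b (d' p).
Proof.
move=> he; have [d' [hd' Ee]] := H1' _ he; exists d'; split => // a b p ab hp.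
have [h0 h1] := rcd_d01 hd'.
have := Ee _ (inM_P p a b hp); rewrite P_comp // => /(congr1 (fun f => f (uu a))) /= E.
by rewrite /cab E.
Qed.

Lemma cab_strict a b p q : a <= b -> uu a < uu b -> 0 <= p -> p < q -> q <= 1 ->
  cab a b p < cab a b q.
Proof.
move=> ab uab p0 pq q1.
have hp : 0 <= p <= 1 by apply/andP; split; lra.
have hq : 0 <= q <= 1 by apply/andP; split; lra.
rewrite lt_neqAle cab_mono ?(ltW pq) // andbT; apply/negP => /eqP E.
have hd' : right_cont_distortion (P 1 q 1) by apply: rcd_P; apply/andP; split; lra.
have [e He] := R2 _ hd'.
have := He a b p ab hp; have := He a b q ab hq.
rewrite E => <-; rewrite /P pq ltxx.
case: ltP => _; rewrite cab1 cab0 //; lra.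
Qed.

Arguments cab_strict [a b p q].

Lemma cab_surj a b s : a <= b -> uu a < uu b -> 0 <= s <= 1 ->
  exists2 r, 0 <= r <= 1 & cab a b r = s.
Proof.
move=> ab uab hs.
have c2 : 0 < cab a b (1/2) < 1.
  apply/andP; split.
    rewrite -(cab0 ab uab); apply: cab_strict => //; lra.
  have := @cab_strict a b (1/2) 1 ab uab; rewrite cab1; apply; lra.
have he : right_cont_distortion (P s (cab a b (1/2)) 1).
  by apply: rcd_P => //; apply/andP; split; lra.
have [d' [hd' Ed']] := R1 _ he.
have h2 : 0 <= (1/2 : R) <= 1 by apply/andP; split; lra.
exists (d' (1/2)); first exact: rcd_01 hd' h2.
rewrite -Ed' // /P ltxx.
by have -> : cab a b (1/2) < 1 by lra.
Qed.

Arguments cab_surj [a b s].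

Lemma cab_indep a b a0 b0 p : a <= b -> uu a < uu b -> a0 <= b0 -> uu a0 < uu b0 ->
  0 <= p <= 1 -> cab a b p = cab a0 b0 p.
Proof.
move=> ab uab ab0 uab0 hp.
have [->|pn0] := eqVneq p 0; first by rewrite !cab0.
have [->|pn1] := eqVneq p 1; first by rewrite !cab1.
have /andP[p0 p1] := hp.
have p0' : 0 < p by rewrite lt_neqAle eq_sym pn0.
have p1' : p < 1 by rewrite lt_neqAle pn1.
have hd' : right_cont_distortion (P p p 1) by apply: rcd_P; apply/andP; split; lra.
have [e He] := R2 _ hd'.
have [r hr cr] := cab_surj ab uab (cab01 a0 b0 p hp).
have Pp : P p p 1 p = p by rewrite /P ltxx p1'.
have E1 : cab a b (P p p 1 r) = cab a b r.
  by rewrite He // cr -He // Pp.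
have hPr : 0 <= P p p 1 r <= 1 by have := rcd_01 hd' hr.
have Eq : P p p 1 r = r.
  apply/eqP; rewrite eq_le; apply/andP; split; rewrite leNgt; apply/negP => h.
    by have := cab_strict ab uab (andP hr).1 h (andP hPr).2; rewrite E1 ltxx.
  by have := cab_strict ab uab (andP hPr).1 h (andP hr).2; rewrite E1 ltxx.
move: Eq; rewrite /P; case: ltP => rp.
  move=> r0; move: cr; rewrite -r0 cab0 // => c0.
  have := cab_strict ab0 uab0 (lexx 0) p0' p1; rewrite -c0 cab0 //; lra.
case: ltP => r1.
  by move=> pr; rewrite {1}pr.
move=> r1'; move: cr; rewrite -r1' cab1 => c1.
have := cab_strict ab0 uab0 p0 p1' (lexx 1); rewrite -c1 cab1; lra.
Qed.


Lemma exists_d : exists d, d 0 = 0 /\ d 1 = 1 /\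
  (forall p, 0 <= p <= 1 -> 0 <= d p <= 1) /\
  (forall p q, 0 <= p -> p < q -> q <= 1 -> d p < d q) /\
  (forall s, 0 <= s <= 1 -> exists2 r, 0 <= r <= 1 & d r = s) /\
  (forall a b p, a <= b -> 0 <= p <= 1 -> T (P p a b) = P (d p) (uu a) (uu b)).
Proof.
have [[a0 [b0 [ab0 uab0]]]|nex] := pselect (exists a0 b0, a0 <= b0 /\ uu a0 < uu b0).
  exists (cab a0 b0); split; first exact: cab0.
  split; first exact: cab1.
  split; first exact: cab01.
  split; first by move=> p q; apply: cab_strict.
  split; first by move=> s; apply: cab_surj.
  move=> a b p ab hp; rewrite TP' //.
  have : uu a <= uu b by apply: uu_inc.
  rewrite le_eqVlt => /orP[/eqP uab|uab]; first by rewrite !P_eqab.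
  by rewrite (cab_indep _ _ _ _ _ ab uab ab0 uab0 hp).
exists id; split => //; split => //; split => //.
split; first by move=> p q _ h _.
split; first by move=> s hs; exists s.
move=> a b p ab hp; rewrite TP' //.
have : uu a <= uu b by apply: uu_inc.
rewrite le_eqVlt => /orP[/eqP uab|uab]; first by rewrite !P_eqab.
by exfalso; apply: nex; exists a, b.
Qed.


Section WithD.
Variable d : R -> R.
Hypothesis hd0 : d 0 = 0.
Hypothesis hd1 : d 1 = 1.
Hypothesis hd01 : forall p, 0 <= p <= 1 -> 0 <= d p <= 1.
Hypothesis hds : forall p q, 0 <= p -> p < q -> q <= 1 -> d p < d q.
Hypothesis hdsurj : forall s, 0 <= s <= 1 -> exists2 r, 0 <= r <= 1 & d r = s.
Hypothesis hTP : forall a b p, a <= b -> 0 <= p <= 1 -> T (P p a b) = P (d p) (uu a) (uu b).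

Lemma d_mono p q : 0 <= p -> p <= q -> q <= 1 -> d p <= d q.
Proof.
move=> p0 pq q1; move: pq; rewrite le_eqVlt => /orP[/eqP ->//|pq].
exact/ltW/hds.
Qed.

Arguments d_mono [p q].

Lemma lowerB F x y : inM F -> uu x <= y -> d (F x) <= T F y.
Proof.
move=> FM uxy; have F01 := inM01 FM.
have [Fi [Frc [a [b [Fa Fb]]]]] := FM.
pose b' := Num.max b x.
have xb' : x <= b' by rewrite le_max lexx orbT.
have CM := inM_P (F x) x b' (F01 x).
have CF : forall t, P (F x) x b' t <= F t.
  move=> t; rewrite /P; case: (ltP t x) => tx; first by have /andP[] := F01 t.
  case: (ltP t b') => tb; first exact: Fi.
  by rewrite Fb //; move: tb; rewrite ge_max => /andP[].
have := @T_le F (P (F x) x b') FM CM CF y.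
rewrite hTP // /P ltNge uxy /=.
have /andP[_ h1] := hd01 _ (F01 x).
by case: ifP => _ h; lra.
Qed.

Lemma supL01 F x : inM F -> 0 <= sup [set F t | t in [set t | t < x]] <= 1.
Proof.
move=> FM; have F01 := inM01 FM; apply/andP; split.
  apply: (le_trans (andP (F01 (x - 1))).1); apply: ub_le_sup.
    by exists 1 => w [t _ <-]; have /andP[] := F01 t.
  by exists (x - 1) => //=; lra.
apply: ge_sup; first by exists (F (x - 1)), (x - 1) => //=; lra.
by move=> w [t _ <-]; have /andP[] := F01 t.
Qed.

Arguments supL01 [F x].

Lemma supL_le F x c : (forall t, t < x -> F t <= c) -> sup [set F t | t in [set t | t < x]] <= c.
Proof.
move=> H; apply: ge_sup; first by exists (F (x - 1)), (x - 1) => //=; lra.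
by move=> w [t ht <-]; exact: H.
Qed.

Arguments lowerB [F x y].

Lemma upperB F x y : inM F -> y < uu x -> T F y <= d (sup [set F t | t in [set t | t < x]]).
Proof.
move=> FM yux; have F01 := inM01 FM.
have [Fi [Frc [a [b [Fa Fb]]]]] := FM.
set L := sup _.
have L01 : 0 <= L <= 1 by exact: supL01.
pose a' := Num.min a (x - 1).
have a'x : a' <= x by rewrite ge_min; apply/orP; right; lra.
have BM := inM_P L a' x L01.
have FB : forall t, F t <= P L a' x t.
  move=> t; rewrite /P; case: (ltP t a') => ta.
    by rewrite Fa //; move: ta; rewrite lt_min => /andP[].
  case: (ltP t x) => tx; last by have /andP[] := F01 t.
  apply: ub_le_sup; last by exists t.
  by exists 1 => w [t' _ <-]; have /andP[] := F01 t'.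
have := @T_le (P L a' x) F BM FM FB y.
rewrite hTP // /P yux.
have /andP[h0 _] := hd01 _ L01.
by case: ifP => _ h; lra.
Qed.

Arguments upperB [F x y].

Lemma TF_formula F y : inM F -> T F y = d (Tu uu F y).
Proof.
move=> FM; have F01 := inM01 FM.
have TFM := TM _ FM; have TF01 := inM01 TFM.
have [Fi [Frc [a [b [Fa Fb]]]]] := FM.
set s := Tu uu F y.
have s01 : 0 <= s <= 1 by exact: Tu01.
apply/eqP; rewrite eq_le; apply/andP; split; last first.
  rewrite leNgt; apply/negP => lt.
  have [r hr dr] := hdsurj _ (TF01 y).
  have rs : r < s.
    rewrite ltNge; apply/negP => sr.
    by have := d_mono (andP s01).1 sr (andP hr).2; rewrite dr leNgt lt.
  have [[x0 hx0]|nex] := pselect (exists x, uu x <= y); last first.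
    move: rs; rewrite /s Tu_empty; first by have /andP[] := hr; lra.
    by move=> x; rewrite ltNge; apply/negP => h; apply: nex; exists x.
  have [w [x hx <-] rw] := sup_gt (ex_intro _ (F x0) (ex_intro2 _ _ x0 hx0 erefl)) rs.
  have := hds _ _ (andP hr).1 rw (andP (F01 x)).2.
  have := lowerB FM hx; rewrite dr; lra.
have [[x0 hx0]|nex] := pselect (exists x, uu x <= y); last first.
  have ya : y < uu a by rewrite ltNge; apply/negP => h; apply: nex; exists a.
  apply: (le_trans (upperB FM ya)); apply: d_mono.
  - by have /andP[] := supL01 (x:=a) FM.
  - apply: (@le_trans _ _ 0); last by have /andP[] := s01.
    by apply: supL_le => t ta; rewrite Fa.
  - by have /andP[] := s01.
have [[x1 [hx1 bx1]]|nb] := pselect (exists x, uu x <= y /\ b <= x).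
  have s1 : s = 1.
    apply/eqP; rewrite eq_le (andP s01).2 /=; rewrite -(Fb x1) //; exact: Tu_ge.
  by rewrite s1 hd1; have /andP[] := TF01 y.
pose S := [set x | uu x <= y].
have Sne : S !=set0 by exists x0.
have Sub : ubound S b.
  move=> x hx; rewrite leNgt; apply/negP => bx; apply: nb; exists x; split => //; exact: ltW.
have Ssup : has_sup S by split => //; exists b.
set m := sup S.
have [umy|yum] := leP (uu m) y.
  rewrite leNgt; apply/negP => lt.
  have [r hr dr] := hdsurj _ (TF01 y).
  have sr : s < r.
    rewrite ltNge; apply/negP => rs.
    by have := d_mono (andP hr).1 rs (andP s01).2; rewrite dr leNgt lt.
  have Fms : F m <= s by exact: Tu_ge.
  have /rcP/(_ (r - F m)) [|dd dd0 Hdd] := Frc m; first lra.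
  set x := m + dd / 2.
  have := Hdd x; rewrite /x.
  have -> : m < m + dd / 2 < m + dd by apply/andP; split; lra.
  move=> /(_ isT) hF.
  have Fxr : F x < r.
    have Fmx : F m <= F x by apply: Fi; rewrite /x; lra.
    move: hF; rewrite ger0_norm ?subr_ge0 //; rewrite /x; lra.
  have yux : y < uu x.
    rewrite ltNge; apply/negP => h.
    have := ub_le_sup (proj2 Ssup) h; rewrite -/m /x; lra.
  have := upperB FM yux.
  have L01 := supL01 (x:=x) FM.
  have Lx : sup [set F t | t in [set t | t < x]] <= F x.
    by apply: supL_le => t tx; apply: Fi; exact: ltW.
  have := hds _ _ (andP L01).1 (le_lt_trans Lx Fxr) (andP hr).2.
  rewrite dr; lra.
apply: (le_trans (upperB FM yum)); apply: d_mono.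
- by have /andP[] := supL01 (x:=m) FM.
- apply: supL_le => t tm.
  have [w Sw tw] := sup_gt Sne tm.
  apply: Tu_ge => //; apply: le_trans Sw; exact/uu_inc/ltW.
- by have /andP[] := s01.
Qed.

Lemma uu_lc x : uu y @[y --> x^'-] --> uu x.
Proof.
apply/lcP => e e0.
suff [t tx ut] : exists2 t, t < x & uu x - e < uu t.
  exists (x - t); first lra.
  move=> y /andP[h1 h2].
  have h3 : uu t <= uu y by apply: uu_inc; lra.
  have h4 : uu y <= uu x by apply: uu_inc; lra.
  rewrite ler0_norm ?subr_le0 //; lra.
apply: contrapT => nt'.
have nt : forall t, t < x -> uu t <= uu x - e.
  move=> t tx; rewrite leNgt; apply/negP => h; apply: nt'; by exists t.
pose y0 := uu x - e / 2.
have FM := unif_inM x.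
have hd' : right_cont_distortion (P (1/2) (1/2) 1) by apply: rcd_P; apply/andP; split; lra.
have [e1 [he1 Ee1]] := H2' _ hd'.
have GM := inM_comp hd' FM.
have E := congr1 (fun f => f y0) (Ee1 _ FM); simpl in E.
have s1 : Tu uu (unif x) y0 = 1.
  apply/eqP; rewrite eq_le; have /andP[s0 ->] := Tu01 uu (unif x) y0 FM; rewrite /=.
  rewrite leNgt; apply/negP => s1.
  pose t := x - (1 - Tu uu (unif x) y0) / 2.
  have tx : t < x by rewrite /t; lra.
  have hy0 : uu x - e <= y0 by rewrite /y0; lra.
  have := Tu_ge FM (le_trans (nt _ tx) hy0).
  rewrite /unif /t; case: ltP => h1; first lra.
  case: ltP => h2; lra.
rewrite !TF_formula // s1 hd1 in E.
have sG : Tu uu (fun t => P (1/2) (1/2) 1 (unif x t)) y0 <= 1/2.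
  apply: Tu_le; last lra.
  move=> t ut.
  have tx : t < x.
    rewrite ltNge; apply/negP => xt; have := uu_inc _ _ xt; rewrite /y0 in ut; lra.
  rewrite /P /unif tx.
  by case: (ltP t (x - 1)) => h1; (case: ltP => h2; [lra | case: ltP => h3; lra]).
have sG01 := Tu01 uu _ y0 GM.
have h12 : 1/2 < (1:R) by lra.
have hlt := hds _ _ (andP sG01).1 (le_lt_trans sG h12) (lexx 1).
have [_ he11] := rcd_d01 he1.
by rewrite -E he11 hd1 ltxx in hlt.
Qed.

End WithD.

End Fwd.
End S.

Section S2.
Variable R : realType.
Implicit Types (f g F G d h u : R -> R) (x y z p a b : R).
Section MS.
Variable d : R -> R.
Hypothesis hm : forall p q, 0 <= p -> p <= q -> q <= 1 -> d p <= d q.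
Hypothesis h01 : forall p, 0 <= p <= 1 -> 0 <= d p <= 1.
Hypothesis hsurj : forall s, 0 <= s <= 1 -> exists2 r, 0 <= r <= 1 & d r = s.

Lemma ms_rc x : 0 <= x < 1 -> d y @[y --> x^'+] --> d x.
Proof.
move=> /andP[x0 x1].
have hx01 : 0 <= x <= 1 by apply/andP; split; lra.
have /andP[dx0 dx1] := h01 x hx01.
apply/rcP => e e0.
have [dx1'|dxn1] := eqVneq (d x) 1.
  exists (1 - x); first lra.
  move=> y /andP[h1 h2].
  have y1 : y <= 1 by lra.
  have hxy := hm _ _ x0 (ltW h1) y1.
  have hy01 : 0 <= y <= 1 by apply/andP; split; lra.
  have /andP[_ hy1] := h01 y hy01.
  rewrite ger0_norm; lra.
have dxl : d x < 1 by rewrite lt_neqAle dxn1 dx1.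
have [z /andP[z1 z2] z3] : exists2 z, d x < z <= 1 & z - d x < e.
  case: (leP (d x + e / 2) 1) => h.
    exists (d x + e / 2); [apply/andP; split; lra | lra].
  exists 1; [apply/andP; split; lra | lra].
have hz : 0 <= z <= 1 by apply/andP; split; lra.
have [w hw dw] := hsurj z hz.
have /andP[w0 w1] := hw.
have xw : x < w.
  rewrite ltNge; apply/negP => wx; have := hm _ _ w0 wx (ltW x1); lra.
exists (w - x); first lra.
move=> y /andP[h1 h2].
have y0 : 0 <= y by lra.
have yw : y <= w by lra.
have y1 : y <= 1 by lra.
have a2 := hm _ _ x0 (ltW h1) y1.
have a3 := hm _ _ y0 yw w1.
rewrite ger0_norm; lra.
Qed.

Lemma ms_lc x : 0 < x <= 1 -> d y @[y --> x^'-] --> d x.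
Proof.
move=> /andP[x0 x1].
have hx01 : 0 <= x <= 1 by apply/andP; split; lra.
have /andP[dx0 dx1] := h01 x hx01.
apply/lcP => e e0.
have [dx0'|dxn0] := eqVneq (d x) 0.
  exists x; first lra.
  move=> y /andP[h1 h2].
  have y0 : 0 <= y by lra.
  have hxy := hm _ _ y0 (ltW h2) x1.
  have hy01 : 0 <= y <= 1 by apply/andP; split; lra.
  have /andP[hy0 _] := h01 y hy01.
  rewrite ler0_norm; lra.
have dxl : 0 < d x by rewrite lt_neqAle eq_sym dxn0 dx0.
have [z /andP[z1 z2] z3] : exists2 z, 0 <= z < d x & d x - z < e.
  case: (leP 0 (d x - e / 2)) => h.
    exists (d x - e / 2); [apply/andP; split; lra | lra].
  exists 0; [apply/andP; split; lra | lra].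
have hz : 0 <= z <= 1 by apply/andP; split; lra.
have [w hw dw] := hsurj z hz.
have /andP[w0 w1] := hw.
have wx : w < x.
  rewrite ltNge; apply/negP => xw; have := hm _ _ (ltW x0) xw w1; lra.
exists (x - w); first lra.
move=> y /andP[h1 h2].
have y0 : 0 <= y by lra.
have wy : w <= y by lra.
have y1 : y <= 1 by lra.
have a2 := hm _ _ y0 (ltW h2) x1.
have a3 := hm _ _ w0 wy y1.
rewrite ler0_norm; lra.
Qed.

Lemma ms_cont : {within `[0, 1], continuous d}.
Proof.
apply/continuous_within_itvP; first lra.
split.
- move=> x; rewrite in_itv /= => /andP[x0 x1].
  have hx1 : 0 <= x < 1 by apply/andP; split; lra.
  have hx2 : 0 < x <= 1 by apply/andP; split; lra.
  have H := @lr_cont R d x (ms_rc x hx1) (ms_lc x hx2).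
  exact: H.
- by apply: ms_rc; rewrite lexx ltr01.
- by apply: ms_lc; rewrite lexx ltr01.
Qed.

End MS.
End S2.


Lemma forward (R : realType) (T : (R -> R) -> (R -> R))
  (TM : forall F, inM F -> inM (T F))
  (Tmono : monotone_map T)
  (H1 : forall d, right_cont_distortion d ->
       exists d', right_cont_distortion d' /\
         forall F, inM F -> Td d (T F) = T (Td d' F))
  (H2 : forall d', right_cont_distortion d' ->
       exists d, right_cont_distortion d /\
         forall F, inM F -> Td d (T F) = T (Td d' F)) :
  exists (u d : R -> R),
     increasing u /\ (forall x, u y @[y --> x^'-] --> u x) /\
     strict_cont_distortion d /\
     forall F, inM F -> T F = Td d (Tu u F).
Proof.
have [d [hd0 [hd1 [hd01 [hds [hdsurj hTP]]]]]] := @exists_d R T TM Tmono H1 H2.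
have hm : forall p q : R, 0 <= p -> p <= q -> q <= 1 -> d p <= d q.
  move=> p q p0; rewrite le_eqVlt => /orP[/eqP ->//|pq] q1; exact/ltW/hds.
exists (uu R T TM H1), d; split; first exact: uu_inc.
split; first exact: (@uu_lc R T TM Tmono H1 H2 d hd1 hd01 hds hdsurj hTP).
split.
  split; first by split.
  split; first exact: hds.
  exact: ms_cont.
move=> F FM; apply/funext => x.
have TFM := TM _ FM.
have E : (fun y => d (Tu (uu R T TM H1) F y)) = T F.
  apply/funext => y; symmetry; exact: (@TF_formula R T TM Tmono H1 d hd1 hd01 hds hdsurj hTP F y FM).
rewrite /Td E; symmetry; apply: cvg_lim => //.
by case: TFM => _ [+ _]; apply.
Qed.


Arguments inM01 {R} [F].
Arguments Tu_ge {R} [u F y x].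
Arguments Td_inM {R} [d F].
Arguments inM_comp {R} [d F].

Section B.
Variable R : realType.
Implicit Types (f g F G d h k u : R -> R) (x y z p a b : R).

Lemma rc_comp2 h k x : right_cont_distortion h -> 0 <= k x <= 1 ->
  (exists2 d0, 0 < d0 & forall y, x < y < x + d0 -> k x <= k y <= 1) ->
  k y @[y --> x^'+] --> k x -> h (k y) @[y --> x^'+] --> h (k x).
Proof.
move=> [[dm [dr [d0 dd1]]] drc] kx [d0' d0'0 Hd0] krc.
apply/rcP => e e0.
have [/eqP G1|Gn1] := boolP (k x == 1).
  exists d0' => // y Hy.
  have /andP[h1 h2] := Hd0 y Hy.
  have : k y = 1 by apply/eqP; rewrite eq_le h2 -G1 h1.
  by move=> ->; rewrite G1 subrr normr0.
have Gx1 : k x < 1 by rewrite lt_neqAle Gn1 (andP kx).2.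
have G0x : 0 <= k x < 1 by rewrite Gx1 (andP kx).1.
have /rcP/(_ e e0) [d1 d10 Hd1] := drc (k x) G0x.
have /rcP/(_ d1 d10) [d2 d20 Hd2] := krc.
have [dd [dd0 [dd1' dd2]]] : exists dd, 0 < dd /\ dd <= d2 /\ dd <= d0'.
  case: (leP d2 d0') => hle; [exists d2 | exists d0']; split => //; split => //; lra.
exists dd => // y /andP[Hy1 Hy2].
have Hy : x < y < x + d2 by apply/andP; split; lra.
have Hy' : x < y < x + d0' by apply/andP; split; lra.
have := Hd2 y Hy.
have /andP[Gxy _] := Hd0 y Hy'.
move: Gxy; rewrite le_eqVlt => /orP[/eqP ->|lt] H2; first by rewrite subrr normr0.
move: H2; rewrite gtr0_norm ?subr_gt0 // ltrBlDl => H2; apply: Hd1; by rewrite lt H2.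
Qed.

Lemma rcd_comp h k : right_cont_distortion h -> right_cont_distortion k ->
  right_cont_distortion (fun z => h (k z)).
Proof.
move=> hh hk.
have [[hm [hr [h0 h1]]] hrc] := hh; have [[km [kr [k0 k1]]] krc] := hk.
have kr' : forall x, 0 <= x -> x <= 1 -> 0 <= k x <= 1.
  by move=> x x0 x1; apply: kr; rewrite x0 x1.
split.
  split.
    move=> x y x0 xy y1; apply: hm.
    - by have /andP[] := kr' x x0 (le_trans xy y1).
    - exact: km.
    - by have /andP[] := kr' y (le_trans x0 xy) y1.
  split; first by move=> x hx; apply: hr; apply: kr.
  by rewrite k0 h0 k1 h1.
move=> x /andP[x0 x1]; apply: rc_comp2 => //.
- by apply: kr; apply/andP; split; lra.
- exists (1 - x); first lra.
  move=> y /andP[y1 y2]; apply/andP; split; first by apply: km; lra.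
  have y0 : 0 <= y by lra.
  have y1' : y <= 1 by lra.
  by have /andP[] := kr' y y0 y1'.
- by apply: krc; rewrite x0 x1.
Qed.

Section BU.
Variable u : R -> R.
Hypothesis hu : increasing u.
Hypothesis hlc : forall x, u y @[y --> x^'-] --> u x.

Lemma S_cases F y : inM F -> (forall x, y < u x) \/ (exists x, u x <= y /\ F x = 1) \/
  (exists m, u m <= y /\ forall x, u x <= y -> x <= m).
Proof.
move=> FM; have [Fi [Frc [a [b [Fa Fb]]]]] := FM.
have [[x0 hx0]|nex] := pselect (exists x, u x <= y); last first.
  by left => x; rewrite ltNge; apply/negP => h; apply: nex; exists x.
right.
have [[x1 [hx1 bx1]]|nb] := pselect (exists x, u x <= y /\ b <= x).
  by left; exists x1; split => //; rewrite Fb.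
right.
pose S := [set x | u x <= y].
have Sne : S !=set0 by exists x0.
have Sub : ubound S b.
  move=> x hx; rewrite leNgt; apply/negP => bx; apply: nb; exists x; split => //; exact: ltW.
have Ssup : has_sup S by split => //; exists b.
exists (sup S); split; last by move=> x hx; exact: (ub_le_sup (proj2 Ssup)).
rewrite leNgt; apply/negP => ym.
have /lcP/(_ (u (sup S) - y)) [|dd dd0 Hdd] := hlc (sup S); first lra.
have hsd : sup S - dd < sup S by lra.
have [t St tm] := sup_gt Sne hsd.
have tle : t <= sup S by exact: (ub_le_sup (proj2 Ssup)).
move: tle; rewrite le_eqVlt => /orP[/eqP te|tlt].
  by move: St; rewrite /S /= te leNgt ym.
have := Hdd t; rewrite tm tlt => /(_ isT).
have ut : u t <= u (sup S) by apply: hu; exact: ltW.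
rewrite ler0_norm ?subr_le0 //; move: St; rewrite /S /=; lra.
Qed.

Lemma Tu_inc F : inM F -> increasing (Tu u F).
Proof.
move=> FM y y' yy'; apply: Tu_le; last by have /andP[] := @Tu01 R u F y' FM.
move=> x ux; apply: Tu_ge => //; exact: le_trans yy'.
Qed.

Lemma Tu_max F G y m : inM G -> u m <= y -> (forall x, u x <= y -> x <= m) ->
  Tu u G y = G m.
Proof.
move=> GM um hm; apply/eqP; rewrite eq_le Tu_ge // andbT.
apply: Tu_le; last by have /andP[] := inM01 GM m.
move=> x ux; have [Gi _] := GM; exact/Gi/hm.
Qed.

Lemma Tu_one G y x : inM G -> u x <= y -> G x = 1 -> Tu u G y = 1.
Proof.
move=> GM ux Gx; apply/eqP; rewrite eq_le; have /andP[_ ->] := @Tu01 R u G y GM.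
by rewrite -Gx Tu_ge.
Qed.

Lemma Tu_rc F y : inM F -> Tu u F z @[z --> y^'+] --> Tu u F y.
Proof.
move=> FM; have F01 := inM01 FM; have [Fi [Frc [a [b [Fa Fb]]]]] := FM.
have Ti := Tu_inc _ FM.
have [[x [ux Fx]]|nb] := pselect (exists x, u x <= y /\ F x = 1).
  apply: rc_loc; exists 1 => // y' /andP[h1 _].
  have uxy' : u x <= y' by lra.
  by rewrite (Tu_one _ y x FM ux Fx) (Tu_one _ y' x FM uxy' Fx).
suff key : forall e, 0 < e -> exists2 t, y < u t & F t < Tu u F y + e.
  apply/rcP => e e0; have [t yt Ft] := key e e0.
  exists (u t - y); first lra.
  move=> y' /andP[h1 h2].
  have l1 : Tu u F y <= Tu u F y' by apply: Ti; lra.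
  have l2 : Tu u F y' <= F t.
    apply: Tu_le; last by have /andP[] := F01 t.
    move=> x ux; apply: Fi; rewrite leNgt; apply/negP => tx.
    have := hu _ _ (ltW tx); lra.
  rewrite ger0_norm; lra.
move=> e e0.
case: (S_cases _ y FM) => [H|[[x [ux Fx]]|[m [um hm]]]].
- exists (a - 1); first exact: H.
  by rewrite Fa ?Tu_empty //; lra.
- by exfalso; apply: nb; exists x.
- have /rcP/(_ e e0) [dd dd0 Hdd] := Frc m.
  exists (m + dd / 2).
    rewrite ltNge; apply/negP => h; have := hm _ h; lra.
  have hh : m < m + dd / 2 < m + dd by apply/andP; split; lra.
  have H := Hdd _ hh.
  have h2 : F m <= Tu u F y by exact: Tu_ge.
  have h1 : F m <= F (m + dd / 2) by apply: Fi; lra.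
  move: H; rewrite ger0_norm ?subr_ge0 //; lra.
Qed.

Lemma Tu_comp h F y : right_cont_distortion h -> inM F ->
  Tu u (fun t => h (F t)) y = h (Tu u F y).
Proof.
move=> hh FM; have GM := inM_comp hh FM.
have [[_ [_ [h0 h1]]] _] := hh.
case: (S_cases _ y FM) => [H|[[x [ux Fx]]|[m [um hm]]]].
- by rewrite !Tu_empty.
- rewrite (Tu_one _ y x FM ux Fx) (Tu_one _ y x GM ux) // Fx //.
- by rewrite (Tu_max F _ _ _ GM um hm) (Tu_max F _ _ _ FM um hm).
Qed.

Lemma backward (T : (R -> R) -> (R -> R)) (TM : forall F, inM F -> inM (T F)) d
  (hd : strict_cont_distortion d) (hT : forall F, inM F -> T F = Td d (Tu u F)) :
    (forall d, right_cont_distortion d ->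
       exists d', right_cont_distortion d' /\
         forall F, inM F -> Td d (T F) = T (Td d' F)) /\
    (forall d', right_cont_distortion d' ->
       exists d, right_cont_distortion d /\
         forall F, inM F -> Td d (T F) = T (Td d' F)).
Proof.
have [[dm [dr [d0 d1]]] [hds hc]] := hd.
have hsurj : forall s, 0 <= s <= 1 -> exists2 r, 0 <= r <= 1 & d r = s.
  move=> s hs.
  have hs' : Num.min (d 0) (d 1) <= s <= Num.max (d 0) (d 1).
    by rewrite d0 d1 (min_l ler01) (max_r ler01).
  have [c hc' dc] := IVT ler01 hc hs'.
  by exists c => //; move: hc'; rewrite in_itv.
have hdrc : right_cont_distortion d.
  split => //; move=> x hx; exact: (@ms_rc R d dm dr hsurj x hx).
have TF : forall F t, inM F -> T F t = d (Tu u F t).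
  move=> F t FM; rewrite hT //; apply: Td_eq => //.
  - by move=> y; exact: (@Tu01 R u F y FM).
  - exact: Tu_inc.
  - exact: Tu_rc.
have /choice [g hg] : forall z, exists x, 0 <= z <= 1 -> 0 <= x <= 1 /\ d x = z.
  move=> z; have [hz|hz] := pselect (0 <= z <= 1).
    by have [r hr dr'] := hsurj z hz; exists r.
  by exists 0.
have g01 : forall z, 0 <= z <= 1 -> 0 <= g z <= 1 by move=> z hz; case: (hg z hz).
have dg : forall z, 0 <= z <= 1 -> d (g z) = z by move=> z hz; case: (hg z hz).
have inj : forall x y, 0 <= x <= 1 -> 0 <= y <= 1 -> d x = d y -> x = y.
  move=> x y /andP[x0 x1] /andP[y0 y1] e; apply/eqP; rewrite eq_le; apply/andP; split;
    rewrite leNgt; apply/negP => h.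
    by have := hds _ _ y0 h x1; rewrite e ltxx.
  by have := hds _ _ x0 h y1; rewrite e ltxx.
have gd : forall x, 0 <= x <= 1 -> g (d x) = x.
  move=> x hx; apply: inj => //; [apply: g01; exact: dr | apply: dg; exact: dr].
have gm : forall p q, 0 <= p -> p <= q -> q <= 1 -> g p <= g q.
  move=> p q p0 pq q1; rewrite leNgt; apply/negP => h.
  have hp : 0 <= p <= 1 by apply/andP; split; lra.
  have hq : 0 <= q <= 1 by apply/andP; split; lra.
  have := hds _ _ (andP (g01 q hq)).1 h (andP (g01 p hp)).2.
  rewrite !dg //; lra.
have gsurj : forall s, 0 <= s <= 1 -> exists2 r, 0 <= r <= 1 & g r = s.
  by move=> s hs; exists (d s); [exact: dr | exact: gd].
have hgrc : right_cont_distortion g.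
  split; last by move=> x hx; exact: (@ms_rc R g gm g01 gsurj x hx).
  split => //; split => //.
  have h0 : 0 <= (0:R) <= 1 by apply/andP; split; lra.
  have h1 : 0 <= (1:R) <= 1 by apply/andP; split; lra.
  by split; [rewrite -{1}d0 gd | rewrite -{1}d1 gd].
have TU01 : forall F t, inM F -> 0 <= Tu u F t <= 1.
  by move=> F t FM; exact: (@Tu01 R u F t FM).
split.
  move=> d1' hd1; exists (fun z => g (d1' (d z))).
  have hd' : right_cont_distortion (fun z => g (d1' (d z))).
    by apply: rcd_comp => //; apply: rcd_comp.
  split => // F FM.
  have GM := inM_comp hd' FM.
  rewrite (Td_inM hd1 (TM _ FM)) (Td_inM hd' FM); apply/funext => t.
  rewrite (TF _ t GM) (TF _ t FM) (Tu_comp _ _ t hd' FM) dg //.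
  have [[_ [hr1 _]] _] := hd1; apply: hr1; apply: dr; exact: TU01.
move=> d' hd'; exists (fun z => d (d' (g z))).
have hd1 : right_cont_distortion (fun z => d (d' (g z))).
  by apply: rcd_comp => //; apply: rcd_comp.
split => // F FM.
have GM := inM_comp hd' FM.
rewrite (Td_inM hd1 (TM _ FM)) (Td_inM hd' FM); apply/funext => t.
rewrite (TF _ t GM) (TF _ t FM) (Tu_comp _ _ t hd' FM) gd //; exact: TU01.
Qed.

End BU.
End B.


Theorem theorem4 (R : realType) (T : (R -> R) -> (R -> R))
  (TM : forall F, inM F -> inM (T F))
  (Tmono : monotone_map T) :
  ( (* D^R o T subset T o D^R *)
    (forall d, right_cont_distortion d ->
       exists d', right_cont_distortion d' /\
         forall F, inM F -> Td d (T F) = T (Td d' F)) /\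
    (* T o D^R subset D^R o T *)
    (forall d', right_cont_distortion d' ->
       exists d, right_cont_distortion d /\
         forall F, inM F -> Td d (T F) = T (Td d' F)) )
  <->
  (exists (u d : R -> R),
     increasing u /\ (forall x, u y @[y --> x^'-] --> u x) /\
     strict_cont_distortion d /\
     forall F, inM F -> T F = Td d (Tu u F)).
Proof.
split.
  by move=> [H1 H2]; exact: (@forward R T TM Tmono H1 H2).
move=> [u [d [hu [hlc [hd hT]]]]].
exact: (@backward R u hu hlc T TM d hd hT).
Qed.
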